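(* (i) For $(t,x)$ with $0\le t<1$ and $|x|>A^*\sqrt{1-t}$, $\mathcal{L}W^*(t,x)=0$. (ii) If $A^*>0$, then for $(t,x)$ with $0\le t<1$ and $0<|x|<A^*\sqrt{1-t}$, $\mathcal{L}W^*(t,x)\le0$. Here $$W^*(t,x)=\begin{cases}(1-t)^{q/2}G_q(|x|/\sqrt{1-t})\,w(A^* ), & |x|>A^*\sqrt{1-t},\\ h(t,x), & |x|\le A^*\sqrt{1-t}.\end{cases}$$
   Context: For a function $\xi(t,x)$, $\mathcal{L}\xi=\frac{\partial\xi}{\partial t}-\frac{x}{1-t}\frac{\partial\xi}{\partial x}+\frac12\frac{\partial^2\xi}{\partial x^2}$. $q>0$. $F_q(y):=\int_0^\infty u^{q-1}e^{yu-u^2/2}\,\mathrm{d}u$ and $G_q(y):=F_q(-y)$. $D^*>0$ is the unique positive root of $q-D(F_q+G_q)'(D)/(F_q+G_q)(D)=0$. $\overline{U}(t,x)=(1-t)^{q/2}(D^* )^q(F_q+G_q)(x/\sqrt{1-t})/(F_q+G_q)(D^* )$ if $|x|<D^*\sqrt{1-t}$, and $|x|^q$ otherwise. $h(t,x)=\overline{U}(t,x)-|x|^q$ if $|x|<D^*\sqrt{1-t}$, and $0$ otherwise. $w(A):=\frac{1}{G_q(A)}[(D^* )^q(F_q+G_q)(A)/(F_q+G_q)(D^* )-A^q]$ for $0\le A\le D^*$. $A^*$ is the unique maximizer of $w$ over $[0,D^*]$. *)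

(* Defs.v *)
From Stdlib Require Import Reals.
From Coquelicot Require Import Coquelicot.
Open Scope R_scope.

(* x^p for x >= 0, p > 0, with the convention 0^p = 0
   (Stdlib's Rpower 0 p = 1, so we guard it). *)
Definition rpow (x p : R) : R := if Rle_dec x 0 then 0 else Rpower x p.

Definition Fq (q y : R) : R :=
  RInt_gen (fun u => Rpower u (q - 1) * exp (y * u - u ^ 2 / 2))
           (at_right 0) (Rbar_locally p_infty).

Definition Gq (q y : R) : R := Fq q (- y).

Definition FG (q y : R) : R := Fq q y + Gq q y.

Definition Dstar_eq (q D : R) : Prop :=
  q - D * Derive (FG q) D / FG q D = 0.

Definition Ubar (q D t x : R) : R :=
  if Rlt_dec (Rabs x) (D * sqrt (1 - t)) then
    Rpower (1 - t) (q / 2) * Rpower D q * FG q (x / sqrt (1 - t)) / FG q D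
  else rpow (Rabs x) q.

Definition h (q D t x : R) : R :=
  if Rlt_dec (Rabs x) (D * sqrt (1 - t)) then Ubar q D t x - rpow (Rabs x) q
  else 0.

Definition w (q D A : R) : R :=
  / Gq q A * (Rpower D q * FG q A / FG q D - rpow A q).

Definition Wstar (q D A t x : R) : R :=
  if Rlt_dec (A * sqrt (1 - t)) (Rabs x) then
    Rpower (1 - t) (q / 2) * Gq q (Rabs x / sqrt (1 - t)) * w q D A
  else h q D t x.

Definition Lop (xi : R -> R -> R) (t x : R) : R :=
  Derive (fun s => xi s x) t
  - x / (1 - t) * Derive (fun y => xi t y) x
  + / 2 * Derive (fun y => Derive (fun z => xi t z) y) x.

Definition Lop_defined (xi : R -> R -> R) (t x : R) : Prop :=
  ex_derive (fun s => xi s x) t /\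
  ex_derive (fun y => xi t y) x /\
  ex_derive (fun y => Derive (fun z => xi t z) y) x.

(* Main.v *)
Require Import Defs.
From Stdlib Require Import Reals Lra.
From Coquelicot Require Import Coquelicot.
Open Scope R_scope.


Lemma ex_RInt_pos (g : R -> R) a b :
  (forall u, 0 < u -> continuous g u) -> 0 < a -> 0 < b -> ex_RInt g a b.
Proof.
  intros Hc Ha Hb. apply (@ex_RInt_continuous R_CompleteNormedModule). intros z Hz. apply Hc.
  destruct Hz as [Hz _]. apply Rlt_le_trans with (2 := Hz).
  unfold Rmin; destruct Rle_dec; lra.
Qed.

Lemma RInt_gen_pos_exists (g : R -> R) (C : R) :
  (forall u, 0 < u -> continuous g u) ->
  (forall u, 0 < u -> 0 < g u) ->
  (forall a b, 0 < a -> a <= b -> RInt g a b <= C) ->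
  exists L, is_RInt_gen g (at_right 0) (Rbar_locally p_infty) L /\ RInt g 1 2 <= L.
Proof.
  intros Hc Hp Hb.
  set (E := fun r => exists a b, 0 < a <= b /\ r = RInt g a b).
  assert (HE : bound E). { exists C. intros r [a [b [Hab ->]]]. apply Hb; lra. }
  assert (HE2 : exists x, E x). { exists (RInt g 1 1). exists 1, 1. split; [lra|reflexivity]. }
  destruct (completeness E HE HE2) as [L [HL1 HL2]].
  assert (Hnn : forall a b, 0 < a <= b -> 0 <= RInt g a b).
  { intros a b Hab. apply RInt_ge_0; [lra| apply ex_RInt_pos; auto; lra |].
    intros x Hx. apply Rlt_le, Hp; lra. }
  exists L. split.
  2:{ apply HL1. exists 1, 2. split; [lra|reflexivity]. }
  unfold is_RInt_gen.
  apply filterlimi_lim_ext_loc with (f := fun ab => RInt g (fst ab) (snd ab)).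
  { apply Filter_prod with (Q := fun a => 0 < a) (R := fun b => 0 < b).
    - exists (mkposreal 1 Rlt_0_1). intros y _ Hy. exact Hy.
    - exists 0. intros x Hx. exact Hx.
    - intros x y Hx Hy. simpl. apply (@RInt_correct R_CompleteNormedModule). apply ex_RInt_pos; auto. }
  intros P [eps HP].
  assert (Hex : exists a0 b0, 0 < a0 <= b0 /\ L - eps < RInt g a0 b0).
  { apply Classical_Prop.NNPP. intro Hn.
    assert (Hub : is_upper_bound E (L - eps)).
    { intros r [a [b [Hab ->]]]. apply Rnot_lt_le. intro Hlt. apply Hn. exists a, b. split; auto. }
    specialize (HL2 _ Hub). destruct eps; simpl in *; lra. }
  destruct Hex as [a0 [b0 [Hab0 Hr]]].
  apply Filter_prod with (Q := fun a => 0 < a < a0) (R := fun b => b0 < b).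
  - exists (mkposreal a0 (proj1 Hab0)). intros y Hy Hy0. split; auto.
    unfold ball in Hy; simpl in Hy; unfold AbsRing_ball, abs, minus, plus, opp in Hy; simpl in Hy.
    apply Rabs_def2 in Hy. lra.
  - exists b0. auto.
  - intros a b Ha Hb'. simpl. apply HP.
    assert (H1 : RInt g a b = RInt g a a0 + RInt g a0 b0 + RInt g b0 b).
    { rewrite <- (RInt_Chasles g a a0 b) by (apply ex_RInt_pos; auto; lra).
      rewrite <- (RInt_Chasles g a0 b0 b) by (apply ex_RInt_pos; auto; lra).
      unfold plus; simpl; ring. }
    assert (H2 : RInt g a b <= L). { apply HL1. exists a, b. split; [lra|reflexivity]. }
    assert (0 <= RInt g a a0) by (apply Hnn; lra).
    assert (0 <= RInt g b0 b) by (apply Hnn; lra).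
    unfold ball; simpl; unfold AbsRing_ball, abs, minus, plus, opp; simpl.
    apply Rabs_def1; destruct eps; simpl in *; lra.
Qed.

Definition gi (p y u : R) : R := Rpower u (p - 1) * exp (y * u - u ^ 2 / 2).

Lemma Rpower_m1 (u p : R) : 0 < u -> Rpower u (p - 1) = Rpower u p / u.
Proof.
  intros Hu. unfold Rpower.
  replace ((p - 1) * ln u) with (p * ln u + - ln u) by ring.
  rewrite exp_plus, exp_Ropp, exp_ln by exact Hu. reflexivity.
Qed.

Lemma Rpower_pos' (u p : R) : 0 < Rpower u p.
Proof. unfold Rpower. apply exp_pos. Qed.

Lemma gi_ex_derive p y u : 0 < u -> ex_derive (gi p y) u.
Proof. intros Hu. unfold gi, Rpower. auto_derive. lra. Qed.

Lemma gi_cont p y u : 0 < u -> continuous (gi p y) u.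
Proof. intros Hu. apply (ex_derive_continuous (K:=R_AbsRing) (V:=R_NormedModule)), gi_ex_derive, Hu. Qed.

Lemma gi_pos p y u : 0 < u -> 0 < gi p y u.
Proof. intros. unfold gi. apply Rmult_lt_0_compat; [apply Rpower_pos'|apply exp_pos]. Qed.

Definition mj (p u : R) : R := Rpower u (p - 1) / (1 + Rpower u p) ^ 2.
Definition Mj (p u : R) : R := - / (p * (1 + Rpower u p)).

Lemma Mj_derive p u : 0 < p -> 0 < u -> is_derive (Mj p) u (mj p u).
Proof.
  intros Hp Hu. unfold Mj, mj. rewrite Rpower_m1 by exact Hu.
  assert (H1 := Rpower_pos' u p).
  unfold Rpower in *. auto_derive.
  - split; [lra|]. split; [|exact I]. apply Rgt_not_eq. apply Rmult_lt_0_compat; lra.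
  - field. split; lra.
Qed.

Lemma mj_cont p u : 0 < u -> continuous (mj p) u.
Proof.
  intros Hu. apply (ex_derive_continuous (K:=R_AbsRing) (V:=R_NormedModule)). unfold mj.
  assert (H1 := Rpower_pos' u p). unfold Rpower in *. auto_derive.
  repeat split; try lra. apply Rgt_not_eq. nra.
Qed.

Lemma ln_le_id u : 0 < u -> ln u <= u.
Proof. intros Hu. assert (H := exp_ineq1_le (ln u)). rewrite exp_ln in H; lra. Qed.

Lemma exp_le_exp x y : x <= y -> exp x <= exp y.
Proof. intros [H|H]; [left; apply exp_increasing; exact H| subst; lra]. Qed.

Lemma gi_le_mj p y u : 0 < p -> 0 < u ->
  gi p y u <= 4 * exp ((y + 2 * p) ^ 2 / 2) * mj p u.
Proof.
  intros Hp Hu. unfold gi, mj.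
  assert (Hrp : Rpower u p <= exp (p * u)).
  { unfold Rpower. apply exp_le_exp.
    apply Rmult_le_compat_l; [lra| apply ln_le_id; lra]. }
  assert (H1 : 1 <= exp (p * u)).
  { rewrite <- exp_0. apply exp_le_exp. apply Rmult_le_pos; lra. }
  assert (HP := Rpower_pos' u p).
  assert (HQ := Rpower_pos' u (p - 1)).
  assert (H2 : (1 + Rpower u p) ^ 2 <= 4 * exp (2 * p * u)).
  { replace (2 * p * u) with (p * u + p * u) by ring. rewrite exp_plus.
    assert (0 < 1 + Rpower u p) by lra. nra. }
  assert (H3 : exp (y * u - u ^ 2 / 2) * exp (2 * p * u) <= exp ((y + 2 * p) ^ 2 / 2)).
  { rewrite <- exp_plus. apply exp_le_exp.
    assert (0 <= (u - (y + 2 * p)) ^ 2) by apply pow2_ge_0. nra. }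
  assert (Hd : 0 < (1 + Rpower u p) ^ 2) by (apply pow_lt; lra).
  unfold Rdiv. rewrite <- Rmult_assoc.
  rewrite (Rmult_comm (4 * _)).
  rewrite Rmult_assoc. apply Rmult_le_compat_l; [lra|].
  apply Rmult_le_reg_r with ((1 + Rpower u p) ^ 2); [exact Hd|].
  rewrite Rmult_assoc, Rinv_l by lra.
  assert (0 < exp (y * u - u ^ 2 / 2)) by apply exp_pos.
  assert (0 < exp (2 * p * u)) by apply exp_pos.
  nra.
Qed.

Lemma RInt_gi_bound p y a b : 0 < p -> 0 < a -> a <= b ->
  RInt (gi p y) a b <= 4 * exp ((y + 2 * p) ^ 2 / 2) / p.
Proof.
  intros Hp Ha Hab.
  set (K := 4 * exp ((y + 2 * p) ^ 2 / 2)).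
  assert (HK : 0 < K) by (unfold K; assert (0 < exp ((y + 2 * p) ^ 2 / 2)) by apply exp_pos; lra).
  assert (Hm : is_RInt (mj p) a b (minus (Mj p b) (Mj p a))).
  { apply (@is_RInt_derive R_CompleteNormedModule).
    - intros x Hx. apply Mj_derive; auto. destruct Hx as [Hx _].
      unfold Rmin in Hx; destruct Rle_dec; lra.
    - intros x Hx. apply mj_cont. destruct Hx as [Hx _].
      unfold Rmin in Hx; destruct Rle_dec; lra. }
  assert (Hex : ex_RInt (mj p) a b) by (eexists; exact Hm).
  apply Rle_trans with (RInt (fun u => K * mj p u) a b).
  - apply RInt_le; auto.
    + apply (@ex_RInt_continuous R_CompleteNormedModule). intros z Hz. apply gi_cont.
      destruct Hz as [Hz _]. unfold Rmin in Hz; destruct Rle_dec; lra.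
    + apply (ex_RInt_scal (V:=R_CompleteNormedModule) (mj p) a b K). exact Hex.
    + intros x Hx. apply gi_le_mj; lra.
  - assert (Hm2 : is_RInt (fun u => K * mj p u) a b (scal K (minus (Mj p b) (Mj p a)))).
    { apply (is_RInt_scal (V:=R_NormedModule) (mj p)). exact Hm. }
    rewrite (is_RInt_unique _ _ _ _ Hm2).
    unfold scal, minus, plus, opp; simpl; unfold mult; simpl.
    unfold Mj.
    assert (HPa := Rpower_pos' a p). assert (HPb := Rpower_pos' b p).
    assert (0 < / (p * (1 + Rpower b p))) by (apply Rinv_0_lt_compat, Rmult_lt_0_compat; lra).
    assert (/ (p * (1 + Rpower a p)) <= / p).
    { apply Rinv_le_contravar; [lra|]. nra. }
    unfold Rdiv. nra.
Qed.

Lemma Fq_spec p y : 0 < p ->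
  is_RInt_gen (gi p y) (at_right 0) (Rbar_locally p_infty) (Fq p y) /\ 0 < Fq p y.
Proof.
  intros Hp.
  destruct (RInt_gen_pos_exists (gi p y) (4 * exp ((y + 2 * p) ^ 2 / 2) / p))
    as [L [HL HL2]].
  - intros u Hu. apply gi_cont, Hu.
  - intros u Hu. apply gi_pos, Hu.
  - intros a b Ha Hab. apply RInt_gi_bound; auto.
  - assert (HF : Fq p y = L).
    { unfold Fq. apply (is_RInt_gen_unique (V:=R_CompleteNormedModule) (gi p y)). exact HL. }
    rewrite HF. split; [exact HL|].
    apply Rlt_le_trans with (2 := HL2). apply RInt_gt_0; [lra| |].
    + intros x Hx. apply gi_pos. lra.
    + intros x Hx. apply gi_cont. lra.
Qed.


Lemma exp_m1_bound z : Rabs (exp z - 1) <= Rabs z * exp (Rabs z).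
Proof.
  destruct (MVT_gen exp 0 z exp) as [c [Hc Heq]].
  - intros x _. apply is_derive_Reals. apply derivable_pt_lim_exp.
  - intros x _. apply derivable_continuous_pt. apply derivable_pt_exp.
  - rewrite exp_0 in Heq. rewrite Heq, Rminus_0_r, Rabs_mult.
    rewrite (Rabs_right (exp c)) by (left; apply exp_pos).
    rewrite Rmult_comm. apply Rmult_le_compat_l; [apply Rabs_pos|].
    apply exp_le_exp. unfold Rmin, Rmax in Hc. destruct Rle_dec;
    unfold Rabs; destruct Rcase_abs; lra.
Qed.

Lemma exp_m1z_bound z : Rabs (exp z - 1 - z) <= z ^ 2 * exp (Rabs z).
Proof.
  destruct (MVT_gen (fun x => exp x - 1 - x) 0 z (fun x => exp x - 1)) as [c [Hc Heq]].
  - intros x _. auto_derive; auto. ring.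
  - intros x _. apply continuity_pt_minus; [apply continuity_pt_minus|].
    + apply derivable_continuous_pt. apply derivable_pt_exp.
    + apply continuity_pt_const. intros a b; reflexivity.
    + apply derivable_continuous_pt. apply derivable_pt_id.
  - replace (exp z - 1 - z) with ((exp z - 1 - z) - (exp 0 - 1 - 0))
      by (rewrite exp_0; ring).
    rewrite Heq, Rminus_0_r, Rabs_mult.
    assert (Hcz : Rabs c <= Rabs z).
    { unfold Rmin, Rmax in Hc. destruct Rle_dec; unfold Rabs; destruct Rcase_abs; destruct Rcase_abs; lra. }
    apply Rle_trans with (Rabs c * exp (Rabs c) * Rabs z).
    + apply Rmult_le_compat_r; [apply Rabs_pos| apply exp_m1_bound].
    + replace (z ^ 2) with (Rabs z * Rabs z) by (rewrite <- Rabs_mult; simpl; rewrite Rmult_1_r; apply Rabs_right; apply Rle_ge; nra).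
      assert (exp (Rabs c) <= exp (Rabs z)) by (apply exp_le_exp; exact Hcz).
      assert (0 <= Rabs c) by apply Rabs_pos.
      assert (0 < exp (Rabs c)) by apply exp_pos.
      assert (0 <= Rabs z) by apply Rabs_pos.
      replace (Rabs z * Rabs z * exp (Rabs z)) with (Rabs z * exp (Rabs z) * Rabs z) by ring.
      apply Rmult_le_compat_r; [lra|]. apply Rmult_le_compat; lra.
Qed.

Lemma gi_shift p y u : 0 < u -> gi (p + 1) y u = u * gi p y u.
Proof.
  intros Hu. unfold gi. replace (p + 1 - 1) with p by ring.
  rewrite (Rpower_m1 u p Hu). field. lra.
Qed.

Lemma gi_y p y d u : gi p (y + d) u = gi p y u * exp (d * u).
Proof.
  unfold gi. rewrite Rmult_assoc, <- exp_plus. f_equal. f_equal. ring.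
Qed.

Lemma gi_rem_bound p y0 d u : 0 < u -> Rabs d <= 1 ->
  Rabs (gi p (y0 + d) u - gi p y0 u - d * gi (p + 1) y0 u)
  <= d ^ 2 * gi (p + 2) (y0 + 1) u.
Proof.
  intros Hu Hd.
  replace (gi p (y0 + d) u - gi p y0 u - d * gi (p + 1) y0 u)
    with (gi p y0 u * (exp (d * u) - 1 - d * u)).
  2:{ rewrite gi_y, gi_shift by exact Hu. ring. }
  replace (p + 2) with (p + 1 + 1) by ring.
  rewrite gi_shift, gi_shift, gi_y by exact Hu.
  rewrite Rabs_mult. rewrite (Rabs_right (gi p y0 u)) by (left; apply gi_pos; exact Hu).
  assert (Hg := gi_pos p y0 u Hu).
  assert (Hb := exp_m1z_bound (d * u)).
  assert (He : exp (Rabs (d * u)) <= exp (1 * u)).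
  { apply exp_le_exp. rewrite Rabs_mult, (Rabs_right u) by lra.
    apply Rmult_le_compat_r; lra. }
  apply Rle_trans with (gi p y0 u * ((d * u) ^ 2 * exp (Rabs (d * u)))).
  - apply Rmult_le_compat_l; lra.
  - assert (0 <= (d * u) ^ 2) by apply pow2_ge_0.
    replace (d ^ 2 * (u * (u * (gi p y0 u * exp (1 * u)))))
      with (gi p y0 u * ((d * u) ^ 2 * exp (1 * u))) by ring.
    apply Rmult_le_compat_l; [lra|]. apply Rmult_le_compat_l; lra.
Qed.

Lemma Fq_rem_bound p y0 d : 0 < p -> Rabs d <= 1 ->
  Rabs (Fq p (y0 + d) - Fq p y0 - d * Fq (p + 1) y0)
  <= d ^ 2 * Fq (p + 2) (y0 + 1).
Proof.
  intros Hp Hd.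
  destruct (Fq_spec p (y0 + d) Hp) as [H1 _].
  destruct (Fq_spec p y0 Hp) as [H2 _].
  destruct (Fq_spec (p + 1) y0 ltac:(lra)) as [H3 _].
  destruct (Fq_spec (p + 2) (y0 + 1) ltac:(lra)) as [H4 _].
  assert (Hf := is_RInt_gen_minus _ _ _ _ (is_RInt_gen_minus _ _ _ _ H1 H2)
                 (is_RInt_gen_scal _ d _ H3)).
  assert (Hg := is_RInt_gen_scal _ (d ^ 2) _ H4).
  refine (RInt_gen_norm (V:=R_CompleteNormedModule) _ _ _ _ _ _ Hf Hg).
  - apply Filter_prod with (Q := fun a => 0 < a < 1) (R := fun b => 1 < b).
    + exists (mkposreal 1 Rlt_0_1). intros y Hy Hy0. split; auto.
      unfold ball in Hy; simpl in Hy; unfold AbsRing_ball, abs, minus, plus, opp in Hy; simpl in Hy.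
      apply Rabs_def2 in Hy. lra.
    + exists 1. auto.
    + intros a b Ha Hb. simpl. lra.
  - apply Filter_prod with (Q := fun a => 0 < a < 1) (R := fun b => 1 < b).
    + exists (mkposreal 1 Rlt_0_1). intros y Hy Hy0. split; auto.
      unfold ball in Hy; simpl in Hy; unfold AbsRing_ball, abs, minus, plus, opp in Hy; simpl in Hy.
      apply Rabs_def2 in Hy. lra.
    + exists 1. auto.
    + intros a b Ha Hb x Hx. simpl in Hx |- *.
      unfold norm, minus, plus, opp, scal; simpl; unfold abs, mult; simpl.
      apply gi_rem_bound; lra.
Qed.

Lemma Fq_pos p y : 0 < p -> 0 < Fq p y.
Proof. intros Hp. apply (Fq_spec p y Hp). Qed.

Lemma Fq_derive p y0 : 0 < p -> is_derive (Fq p) y0 (Fq (p + 1) y0).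
Proof.
  intros Hp. apply is_derive_Reals. intros eps Heps.
  set (K := Fq (p + 2) (y0 + 1)).
  assert (HK : 0 < K) by (apply Fq_pos; lra).
  assert (Hd : 0 < Rmin 1 (eps / (K + 1))).
  { apply Rmin_pos; [lra|]. apply Rdiv_lt_0_compat; lra. }
  exists (mkposreal _ Hd). intros h Hh0 Hh. simpl in Hh.
  assert (Hh1 : Rabs h <= 1) by (apply Rlt_le, Rlt_le_trans with (1 := Hh), Rmin_l).
  assert (Hh2 : Rabs h < eps / (K + 1)) by (apply Rlt_le_trans with (1 := Hh), Rmin_r).
  assert (B := Fq_rem_bound p y0 h Hp Hh1). fold K in B.
  assert (Ha : 0 < Rabs h) by (apply Rabs_pos_lt; exact Hh0).
  replace ((Fq p (y0 + h) - Fq p y0) / h - Fq (p + 1) y0)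
    with ((Fq p (y0 + h) - Fq p y0 - h * Fq (p + 1) y0) / h) by (field; exact Hh0).
  unfold Rdiv. rewrite Rabs_mult, Rabs_inv.
  apply Rmult_lt_reg_r with (Rabs h); [exact Ha|].
  rewrite Rmult_assoc, Rinv_l by lra. rewrite Rmult_1_r.
  apply Rle_lt_trans with (1 := B).
  replace (h ^ 2) with (Rabs h * Rabs h).
  2:{ rewrite <- Rabs_mult. simpl. rewrite Rmult_1_r. apply Rabs_right. apply Rle_ge. nra. }
  assert (Rabs h * (K + 1) < eps).
  { apply Rmult_lt_reg_r with (/ (K + 1)). apply Rinv_0_lt_compat; lra.
    rewrite Rmult_assoc, Rinv_r by lra. lra. }
  nra.
Qed.


Definition phi (p y u : R) := Rpower u p * exp (y * u - u ^ 2 / 2).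
Definition dphi (p y u : R) := p * gi p y u + y * gi (p + 1) y u - gi (p + 2) y u.

Lemma phi_derive p y u : 0 < u -> is_derive (phi p y) u (dphi p y u).
Proof.
  intros Hu. unfold phi, dphi.
  replace (p + 2) with (p + 1 + 1) by ring.
  rewrite !gi_shift by exact Hu. unfold gi. rewrite (Rpower_m1 u p Hu).
  unfold Rpower. auto_derive. lra.
  replace (y * u + - (u * (u * 1) * / 2)) with (y * u - u ^ 2 / 2) by field. field. lra.
Qed.

Lemma dphi_cont p y u : 0 < u -> continuous (dphi p y) u.
Proof.
  intros Hu. apply (ex_derive_continuous (K:=R_AbsRing) (V:=R_NormedModule)).
  unfold dphi, gi, Rpower. auto_derive. repeat split; lra.
Qed.

Lemma lim0_of (f : R -> R) (F : (R -> Prop) -> Prop) {FF : Filter F} :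
  (forall eps, 0 < eps -> F (fun u => Rabs (f u) < eps)) -> filterlim f F (locally 0).
Proof.
  intros H P [eps HP]. apply filter_imp with (2 := H eps (cond_pos eps)).
  intros u Hu. apply HP. unfold ball; simpl; unfold AbsRing_ball, abs, minus, plus, opp; simpl.
  rewrite Ropp_0, Rplus_0_r. exact Hu.
Qed.

Lemma phi_lim0 p y : 0 < p -> filterlim (phi p y) (at_right 0) (locally 0).
Proof.
  intros Hp. apply lim0_of; [apply at_right_proper_filter|]. intros eps Heps.
  set (C := exp (Rabs y)).
  assert (HC : 0 < C) by apply exp_pos.
  set (r := Rpower (eps / C) (/ p)).
  assert (Hr : 0 < r) by apply Rpower_pos'.
  exists (mkposreal (Rmin r 1) (Rmin_pos _ _ Hr Rlt_0_1)).
  intros u Hu Hu0. simpl in Hu.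
  unfold ball in Hu; simpl in Hu; unfold AbsRing_ball, abs, minus, plus, opp in Hu; simpl in Hu.
  rewrite Ropp_0, Rplus_0_r, Rabs_right in Hu by lra.
  assert (Hur : u < r) by (apply Rlt_le_trans with (1 := Hu), Rmin_l).
  assert (Hu1 : u < 1) by (apply Rlt_le_trans with (1 := Hu), Rmin_r).
  unfold phi. rewrite Rabs_right.
  2:{ apply Rle_ge, Rmult_le_pos; left; [apply Rpower_pos'|apply exp_pos]. }
  assert (H1 : Rpower u p < eps / C).
  { replace (eps / C) with (Rpower r p).
    - apply Rlt_Rpower_l; lra.
    - unfold r. rewrite Rpower_mult. replace (/ p * p) with 1 by (field; lra).
      apply Rpower_1. apply Rdiv_lt_0_compat; lra. }
  assert (H2 : exp (y * u - u ^ 2 / 2) <= C).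
  { apply exp_le_exp. assert (y * u <= Rabs y).
    { apply Rle_trans with (Rabs (y * u)); [apply Rle_abs|].
      rewrite Rabs_mult, (Rabs_right u) by lra.
      assert (0 <= Rabs y) by apply Rabs_pos. nra. }
    nra. }
  assert (HP := Rpower_pos' u p).
  apply Rle_lt_trans with (Rpower u p * C).
  - apply Rmult_le_compat_l; lra.
  - apply Rmult_lt_reg_r with (/ C); [apply Rinv_0_lt_compat; lra|].
    rewrite Rmult_assoc, Rinv_r by lra. unfold Rdiv in H1. lra.
Qed.

Lemma phi_liminf p y : 0 < p -> filterlim (phi p y) (Rbar_locally p_infty) (locally 0).
Proof.
  intros Hp. apply lim0_of; [apply Rbar_locally_filter|]. intros eps Heps.
  set (c := p + y + 1). set (C := exp (c ^ 2 / 2)).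
  assert (HC : 0 < C) by apply exp_pos.
  exists (Rmax 1 (- ln (eps / C))). intros u Hu.
  assert (Hu1 : 1 < u) by (apply Rle_lt_trans with (2 := Hu), Rmax_l).
  assert (Hu2 : - ln (eps / C) < u) by (apply Rle_lt_trans with (2 := Hu), Rmax_r).
  unfold phi. rewrite Rabs_right.
  2:{ apply Rle_ge, Rmult_le_pos; left; [apply Rpower_pos'|apply exp_pos]. }
  assert (H1 : Rpower u p <= exp (p * u)).
  { unfold Rpower. apply exp_le_exp. apply Rmult_le_compat_l; [lra| apply ln_le_id; lra]. }
  apply Rle_lt_trans with (exp (p * u) * exp (y * u - u ^ 2 / 2)).
  { apply Rmult_le_compat_r; [left; apply exp_pos| exact H1]. }
  rewrite <- exp_plus.
  apply Rle_lt_trans with (exp (c ^ 2 / 2 + - u)).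
  { apply exp_le_exp. assert (0 <= (u - c) ^ 2) by apply pow2_ge_0. unfold c in *. nra. }
  rewrite exp_plus. fold C.
  assert (exp (- u) < eps / C).
  { rewrite <- (exp_ln (eps / C)) by (apply Rdiv_lt_0_compat; lra).
    apply exp_increasing. lra. }
  apply Rmult_lt_reg_r with (/ C); [apply Rinv_0_lt_compat; lra|].
  replace (C * exp (- u) * / C) with (exp (- u)) by (field; lra). exact H.
Qed.

Lemma locally_pos x : 0 < x -> locally x (fun z => 0 < z).
Proof.
  intros Hx. exists (mkposreal x Hx). intros y Hy.
  unfold ball in Hy; simpl in Hy; unfold AbsRing_ball, abs, minus, plus, opp in Hy; simpl in Hy.
  apply Rabs_def2 in Hy. lra.
Qed.

Lemma prod_pos_filter :
  filter_prod (at_right 0) (Rbar_locally p_infty)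
    (fun ab => forall x, Rmin (fst ab) (snd ab) <= x <= Rmax (fst ab) (snd ab) -> 0 < x).
Proof.
  apply Filter_prod with (Q := fun a => 0 < a) (R := fun b => 0 < b).
  - exists (mkposreal 1 Rlt_0_1). intros y _ Hy. exact Hy.
  - exists 0. intros x Hx. exact Hx.
  - intros a b Ha Hb x Hx. simpl in Hx. destruct Hx as [Hx _].
    unfold Rmin in Hx. destruct Rle_dec; lra.
Qed.

Lemma Fq_ode p y : 0 < p -> Fq (p + 2) y = y * Fq (p + 1) y + p * Fq p y.
Proof.
  intros Hp.
  assert (H0 : is_RInt_gen (Derive (phi p y)) (at_right 0) (Rbar_locally p_infty) (0 - 0)).
  { apply is_RInt_gen_Derive.
    - apply filter_imp with (2 := prod_pos_filter). intros ab H x Hx.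
      eexists. apply phi_derive, H, Hx.
    - apply filter_imp with (2 := prod_pos_filter). intros ab H x Hx.
      assert (Hx0 := H x Hx).
      apply continuous_ext_loc with (g := dphi p y).
      + apply filter_imp with (2 := locally_pos x Hx0). intros z Hz.
        symmetry. apply is_derive_unique, phi_derive, Hz.
      + apply dphi_cont, Hx0.
    - apply phi_lim0, Hp.
    - apply phi_liminf, Hp. }
  assert (H0' : is_RInt_gen (dphi p y) (at_right 0) (Rbar_locally p_infty) 0).
  { rewrite Rminus_0_r in H0.
    apply is_RInt_gen_ext with (2 := H0).
    apply filter_imp with (2 := prod_pos_filter). intros ab H x Hx.
    apply is_derive_unique, phi_derive, H. lra. }
  destruct (Fq_spec p y Hp) as [H1 _].
  destruct (Fq_spec (p + 1) y ltac:(lra)) as [H2 _].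
  destruct (Fq_spec (p + 2) y ltac:(lra)) as [H3 _].
  assert (H4 := is_RInt_gen_minus _ _ _ _
                 (is_RInt_gen_plus _ _ _ _ (is_RInt_gen_scal _ p _ H1) (is_RInt_gen_scal _ y _ H2)) H3).
  assert (H5 : is_RInt_gen (dphi p y) (at_right 0) (Rbar_locally p_infty)
                 (p * Fq p y + y * Fq (p + 1) y - Fq (p + 2) y)) by exact H4.
  assert (E1 := is_RInt_gen_unique (V:=R_CompleteNormedModule) _ _ H0').
  assert (E2 := is_RInt_gen_unique (V:=R_CompleteNormedModule) _ _ H5).
  rewrite E1 in E2. lra.
Qed.


Lemma V_L (q c sg t x : R) (K0 K1 K2 : R -> R) :
  t < 1 -> sg * sg = 1 ->
  (forall z, is_derive K0 z (K1 z)) ->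
  (forall z, is_derive K1 z (K2 z)) ->
  (forall z, K2 z = z * K1 z + q * K0 z) ->
  exists dt (Vy : R -> R) dyy,
    is_derive (fun s => Rpower (1 - s) (q / 2) * K0 (sg * x / sqrt (1 - s)) * c) t dt /\
    (forall y, is_derive (fun z => Rpower (1 - t) (q / 2) * K0 (sg * z / sqrt (1 - t)) * c) y (Vy y)) /\
    is_derive Vy x dyy /\
    dt - x / (1 - t) * Vy x + / 2 * dyy = 0.
Proof.
  intros Ht Hsg H0 H1 H2.
  set (E := Rpower (1 - t) (q / 2)).
  set (Rt := sqrt (1 - t)).
  assert (HRt : 0 < Rt) by (apply sqrt_lt_R0; lra).
  assert (HRt2 : Rt * Rt = 1 - t) by (apply sqrt_sqrt; lra).
  set (z := sg * x / Rt).
  exists ((q / 2 * (- 1 / (1 - t)) * E * K0 z + E * (sg * x * (1 / (2 * Rt)) / (Rt * Rt)) * K1 z) * c).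
  exists (fun y => E * K1 (sg * y / Rt) * (sg / Rt) * c).
  exists (E * K2 z * (sg / Rt) * (sg / Rt) * c).
  split; [|split; [|split]].
  - unfold E, Rpower. auto_derive.
    + change (1 + - t) with (1 - t). fold Rt. repeat split; try lra; try (eexists; apply H0); try (apply Rgt_not_eq; lra).
    + change (1 + - t) with (1 - t). fold Rt. rewrite (is_derive_unique _ _ _ (H0 _)). change (sg * x * / Rt) with z. field. lra.
  - intros y. unfold E, Rpower. auto_derive.
    + change (1 + - t) with (1 - t). fold Rt. repeat split; try lra; try (eexists; apply H0); try (apply Rgt_not_eq; lra).
    + change (1 + - t) with (1 - t). fold Rt. rewrite (is_derive_unique _ _ _ (H0 _)). change (sg * y * / Rt) with (sg * y / Rt). field. lra.
  - auto_derive.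
    + repeat split; try lra; try (eexists; apply H1).
    + rewrite (is_derive_unique _ _ _ (H1 _)). change (sg * x * / Rt) with z. field. lra.
  - fold z. rewrite H2. unfold z. clearbody E Rt. rewrite <- HRt2.
    transitivity (E * c * (sg * x / Rt * K1 (sg * x / Rt) + q * K0 (sg * x / Rt)) * (sg * sg - 1) / (2 * (Rt * Rt))).
    + field. lra.
    + rewrite Hsg. field. lra.
Qed.

Lemma P_L (q sg x : R) : 0 < sg * x ->
  exists (Py : R -> R) dyy,
    locally x (fun y => is_derive (fun z => Rpower (sg * z) q) y (Py y)) /\
    is_derive Py x dyy /\ Py x = q * Rpower (sg * x) q / x /\
    dyy = q * (q - 1) * Rpower (sg * x) q / (x * x).
Proof.
  intros Hx.
  assert (Hx0 : x <> 0) by (intro; subst; lra).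
  exists (fun y => q * Rpower (sg * y) q / y).
  exists (q * (q - 1) * Rpower (sg * x) q / (x * x)).
  split; [|split; [|split]]; try reflexivity.
  - assert (Hl : locally x (fun y => 0 < sg * y)).
    { assert (Hc : continuous (fun y => sg * y) x).
      { apply (ex_derive_continuous (K:=R_AbsRing) (V:=R_NormedModule)). auto_derive. exact I. }
      apply Hc. exists (mkposreal (sg * x) Hx). intros y Hy.
      unfold ball in Hy; simpl in Hy; unfold AbsRing_ball, abs, minus, plus, opp in Hy; simpl in Hy.
      apply Rabs_def2 in Hy. lra. }
    apply filter_imp with (2 := Hl). intros y Hy.
    assert (y <> 0) by (intro; subst; lra).
    assert (sg <> 0) by (intro; subst; lra).
    unfold Rpower. auto_derive; [exact Hy|]. field. split; assumption.
  - assert (sg <> 0) by (intro; subst; lra).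
    unfold Rpower. auto_derive; [repeat split; auto; lra|].
    field. split; assumption.
Qed.


Lemma Lop_loc (W V : R -> R -> R) (t x dt dyy : R) (Vy : R -> R) :
  locally t (fun s => W s x = V s x) ->
  locally x (fun y => W t y = V t y) ->
  is_derive (fun s => V s x) t dt ->
  locally x (fun y => is_derive (fun z => V t z) y (Vy y)) ->
  is_derive Vy x dyy ->
  Lop_defined W t x /\ Lop W t x = dt - x / (1 - t) * Vy x + / 2 * dyy.
Proof.
  intros HWt HWx HVt HVy HVyy.
  assert (Dt : is_derive (fun s => W s x) t dt).
  { apply is_derive_ext_loc with (2 := HVt).
    apply filter_imp with (2 := HWt). intros s Hs. symmetry. exact Hs. }
  assert (Dy : locally x (fun y => is_derive (fun z => W t z) y (Vy y))).
  { apply filter_imp with (2 := filter_and _ _ (locally_locally _ _ HWx) HVy).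
    intros y [Hy1 Hy2]. apply is_derive_ext_loc with (2 := Hy2).
    apply filter_imp with (2 := Hy1). intros z Hz. symmetry. exact Hz. }
  assert (Dyy : is_derive (fun y => Derive (fun z => W t z) y) x dyy).
  { apply is_derive_ext_loc with (2 := HVyy).
    apply filter_imp with (2 := Dy). intros y Hy. symmetry. apply is_derive_unique, Hy. }
  assert (Dx : is_derive (fun z => W t z) x (Vy x)) by (apply locally_singleton in Dy; exact Dy).
  split.
  - split; [eexists; exact Dt|]. split; [eexists; exact Dx| eexists; exact Dyy].
  - assert (E1 : Derive (fun s => W s x) t = dt) by (apply is_derive_unique; exact Dt).
    assert (E2 : Derive (fun y => W t y) x = Vy x) by (apply is_derive_unique; exact Dx).
    assert (E3 : Derive (fun y => Derive (fun z => W t z) y) x = dyy)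
      by (apply is_derive_unique; exact Dyy).
    unfold Lop. rewrite E1, E2, E3. reflexivity.
Qed.

Lemma cont_lt_loc (f : R -> R) t c :
  continuous f t -> f t < c -> locally t (fun s => f s < c).
Proof.
  intros Hc Hlt. apply (Hc (fun z => z < c)). exists (mkposreal (c - f t) ltac:(lra)). intros y Hy.
  unfold ball in Hy; simpl in Hy; unfold AbsRing_ball, abs, minus, plus, opp in Hy; simpl in Hy.
  apply Rabs_def2 in Hy. lra.
Qed.

Lemma cont_gt_loc (f : R -> R) t c :
  continuous f t -> c < f t -> locally t (fun s => c < f s).
Proof.
  intros Hc Hlt. apply (Hc (fun z => c < z)). exists (mkposreal (f t - c) ltac:(lra)). intros y Hy.
  unfold ball in Hy; simpl in Hy; unfold AbsRing_ball, abs, minus, plus, opp in Hy; simpl in Hy.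
  apply Rabs_def2 in Hy. lra.
Qed.

Lemma sqrt_cont_loc (A t : R) : t < 1 -> continuous (fun s => A * sqrt (1 - s)) t.
Proof.
  intros Ht. apply (ex_derive_continuous (K:=R_AbsRing) (V:=R_NormedModule)).
  auto_derive. lra.
Qed.

Lemma ball_loc x d : 0 < d -> locally x (fun y => Rabs (y - x) < d).
Proof.
  intros Hd. exists (mkposreal d Hd). intros y Hy.
  unfold ball in Hy; simpl in Hy; unfold AbsRing_ball, abs, minus, plus, opp in Hy; simpl in Hy.
  exact Hy.
Qed.


Lemma is_derive_eq (f : R -> R) x l l' : is_derive f x l -> l = l' -> is_derive f x l'.
Proof. intros H ->. exact H. Qed.


Definition G1 q z := - Fq (q + 1) (- z).
Definition G2 q z := Fq (q + 2) (- z).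
Definition FG1 q z := Fq (q + 1) z + G1 q z.
Definition FG2 q z := Fq (q + 2) z + G2 q z.

Lemma F_d0 q (hq : 0 < q) z : is_derive (Fq q) z (Fq (q + 1) z).
Proof. apply Fq_derive, hq. Qed.

Lemma F_d1 q (hq : 0 < q) z : is_derive (Fq (q + 1)) z (Fq (q + 2) z).
Proof.
  apply is_derive_eq with (Fq (q + 1 + 1) z).
  - apply Fq_derive; lra.
  - f_equal. ring.
Qed.

Lemma F_ode q (hq : 0 < q) z : Fq (q + 2) z = z * Fq (q + 1) z + q * Fq q z.
Proof. apply Fq_ode, hq. Qed.

Lemma G_d0 q (hq : 0 < q) z : is_derive (Gq q) z (G1 q z).
Proof.
  unfold Gq, G1.
  apply is_derive_eq with (scal (-1) (Fq (q + 1) (- z))).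
  - apply (is_derive_comp (Fq q) (fun z => - z)). apply F_d0, hq.
    auto_derive; [exact I| ring].
  - unfold scal; simpl; unfold mult; simpl. ring.
Qed.

Lemma G_d1 q (hq : 0 < q) z : is_derive (G1 q) z (G2 q z).
Proof.
  unfold G1, G2.
  apply is_derive_eq with (- scal (-1) (Fq (q + 2) (- z))).
  - apply (is_derive_opp (fun z => Fq (q + 1) (- z))).
    apply (is_derive_comp (Fq (q + 1)) (fun z => - z)). apply F_d1, hq.
    auto_derive; [exact I| ring].
  - unfold scal; simpl; unfold mult; simpl. ring.
Qed.

Lemma G_ode q (hq : 0 < q) z : G2 q z = z * G1 q z + q * Gq q z.
Proof. unfold G2, G1, Gq. rewrite F_ode by exact hq. ring. Qed.

Lemma FG_d0 q (hq : 0 < q) z : is_derive (FG q) z (FG1 q z).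
Proof.
  unfold FG, FG1. apply (is_derive_plus (Fq q) (Gq q)); [apply F_d0; exact hq | apply G_d0; exact hq].
Qed.

Lemma FG_d1 q (hq : 0 < q) z : is_derive (FG1 q) z (FG2 q z).
Proof.
  unfold FG1, FG2. apply (is_derive_plus (Fq (q + 1)) (G1 q)); [apply F_d1; exact hq | apply G_d1; exact hq].
Qed.

Lemma FG_ode q (hq : 0 < q) z : FG2 q z = z * FG1 q z + q * FG q z.
Proof. unfold FG2, FG1, FG. rewrite F_ode, G_ode by exact hq. ring. Qed.

Lemma G_pos q (hq : 0 < q) z : 0 < Gq q z.
Proof. unfold Gq. apply Fq_pos, hq. Qed.

Lemma FG_pos q (hq : 0 < q) z : 0 < FG q z.
Proof. unfold FG. assert (0 < Fq q z) by (apply Fq_pos, hq). assert (HG := G_pos q hq z). lra. Qed.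



Lemma deriv_sign_pos (f : R -> R) x l : is_derive f x l -> 0 < l ->
  exists d, 0 < d /\ forall h, 0 < h < d -> f (x - h) < f x /\ f x < f (x + h).
Proof.
  intros Hd Hl. apply is_derive_Reals in Hd.
  destruct (Hd (l / 2) ltac:(lra)) as [del Hdel].
  exists del. split; [apply cond_pos|]. intros h Hh.
  assert (A1 := Hdel h ltac:(lra) ltac:(rewrite Rabs_right; lra)).
  assert (A2 := Hdel (- h) ltac:(lra) ltac:(rewrite Rabs_left; lra)).
  apply Rabs_def2 in A1. apply Rabs_def2 in A2.
  destruct A1 as [_ A1]. destruct A2 as [_ A2].
  replace (x + - h) with (x - h) in A2 by ring.
  split.
  - assert (0 < (f (x - h) - f x) / - h) by lra.
    unfold Rdiv in H. rewrite <- Ropp_inv_permute in H by lra.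
    assert (0 < / h) by (apply Rinv_0_lt_compat; lra). nra.
  - assert (0 < (f (x + h) - f x) / h) by lra.
    unfold Rdiv in H. assert (0 < / h) by (apply Rinv_0_lt_compat; lra).
    assert (0 < h) by lra.
    apply Rmult_lt_compat_r with (r := h) in H; [|lra].
    rewrite Rmult_assoc, Rinv_l, Rmult_0_l in H by lra. lra.
Qed.

Lemma deriv_sign_neg (f : R -> R) x l : is_derive f x l -> l < 0 ->
  exists d, 0 < d /\ forall h, 0 < h < d -> f x < f (x - h) /\ f (x + h) < f x.
Proof.
  intros Hd Hl.
  destruct (deriv_sign_pos (fun y => - f y) x (- l)) as [d [Hd0 Hh]].
  - apply (is_derive_opp f). exact Hd.
  - lra.
  - exists d. split; auto. intros h H. specialize (Hh h H). lra.
Qed.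

Lemma rpow_pos_eq a q : 0 < a -> rpow a q = Rpower a q.
Proof. intros Ha. unfold rpow. destruct Rle_dec; [lra|reflexivity]. Qed.

Lemma KeyA q D A : 0 < q -> 0 < D -> 0 <= A <= D ->
  (forall a, 0 <= a <= D -> w q D a <= w q D A) -> 0 < A -> 2 * (A * A) <= q - 1.
Proof.
  intros hq hD hA hAmax HA.
  set (c := Rpower D q / FG q D).
  set (wA := w q D A).
  assert (HGp := G_pos q hq). assert (HFGp := FG_pos q hq).
  assert (HwD : w q D D = 0).
  { unfold w. rewrite rpow_pos_eq by lra.
    replace (Rpower D q * FG q D / FG q D) with (Rpower D q)
      by (field; apply Rgt_not_eq, HFGp).
    rewrite Rminus_diag_eq by reflexivity. apply Rmult_0_r. }
  assert (Hw0 : 0 < w q D 0).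
  { unfold w, rpow. destruct Rle_dec; [|lra]. rewrite Rminus_0_r.
    apply Rmult_lt_0_compat; [apply Rinv_0_lt_compat, HGp|].
    apply Rdiv_lt_0_compat; [|apply HFGp]. apply Rmult_lt_0_compat; [apply Rpower_pos'|apply HFGp]. }
  assert (HAD : A < D).
  { destruct (Rle_lt_or_eq_dec _ _ (proj2 hA)) as [H|H]; [exact H|].
    exfalso. assert (H0 := hAmax 0 ltac:(lra)). fold wA in H0.
    unfold wA in H0. rewrite H, HwD in H0. lra. }
  set (psi := fun a => wA * Gq q a - (c * FG q a - Rpower a q)).
  set (psi1 := fun a => wA * G1 q a - (c * FG1 q a - q * Rpower a q / a)).
  set (psi2 := fun a => wA * G2 q a - (c * FG2 q a - q * (q - 1) * Rpower a q / (a * a))).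
  assert (Hpsi_ge : forall a, 0 < a <= D -> 0 <= psi a).
  { intros a Ha. assert (Hw := hAmax a ltac:(lra)). fold wA in Hw.
    unfold w in Hw. rewrite rpow_pos_eq in Hw by lra.
    assert (HG := HGp a).
    unfold psi, c.
    apply Rmult_le_compat_r with (r := Gq q a) in Hw; [|lra].
    rewrite Rmult_comm, <- Rmult_assoc, Rinv_r, Rmult_1_l in Hw by lra.
    unfold Rdiv in *. lra. }
  assert (HpsiA : psi A = 0).
  { unfold psi, wA, w, c. rewrite rpow_pos_eq by lra. field. split.
    - apply Rgt_not_eq, HFGp.
    - apply Rgt_not_eq, HGp. }
  assert (Dpsi : forall a, 0 < a -> is_derive psi a (psi1 a)).
  { intros a Ha. unfold psi, psi1.
    apply (is_derive_minus (fun a => wA * Gq q a) (fun a => c * FG q a - Rpower a q)).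
    - apply (is_derive_scal (Gq q)). apply G_d0, hq.
    - apply (is_derive_minus (fun a => c * FG q a) (fun a => Rpower a q)).
      + apply (is_derive_scal (FG q)). apply FG_d0, hq.
      + apply is_derive_eq with (q * Rpower a (q - 1)).
        * apply is_derive_Reals. apply derivable_pt_lim_power, Ha.
        * change (@eq R (q * Rpower a (q - 1)) (q * Rpower a q / a)). rewrite (Rpower_m1 a q Ha). unfold Rdiv. ring. }
  assert (Dpsi1 : forall a, 0 < a -> is_derive psi1 a (psi2 a)).
  { intros a Ha. unfold psi1, psi2.
    apply (is_derive_minus (fun a => wA * G1 q a) (fun a => c * FG1 q a - q * Rpower a q / a)).
    - apply (is_derive_scal (G1 q)). apply G_d1, hq.
    - apply (is_derive_minus (fun a => c * FG1 q a) (fun a => q * Rpower a q / a)).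
      + apply (is_derive_scal (FG1 q)). apply FG_d1, hq.
      + assert (Hl : locally a (fun z => 0 < z)) by (apply locally_pos, Ha).
        unfold Rpower. auto_derive; [repeat split; try lra; apply Rgt_not_eq; lra|].
        field. lra. }
  assert (Hpsi1A : psi1 A = 0).
  { destruct (Rtotal_order (psi1 A) 0) as [Hn|[Hz|Hp]]; [|exact Hz|].
    - destruct (deriv_sign_neg psi A _ (Dpsi A HA) Hn) as [d [Hd Hh]].
      set (h := Rmin d (D - A) / 2).
      assert (Hh0 : 0 < h) by (unfold h; apply Rdiv_lt_0_compat; [apply Rmin_pos; lra|lra]).
      assert (Hh1 : h < d) by (unfold h; assert (Rmin d (D - A) <= d) by apply Rmin_l; lra).
      assert (Hh2 : h < D - A) by (unfold h; assert (Rmin d (D - A) <= D - A) by apply Rmin_r; lra).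
      destruct (Hh h ltac:(lra)) as [_ H2].
      assert (Hg := Hpsi_ge (A + h) ltac:(lra)). lra.
    - destruct (deriv_sign_pos psi A _ (Dpsi A HA) Hp) as [d [Hd Hh]].
      set (h := Rmin d A / 2).
      assert (Hh0 : 0 < h) by (unfold h; apply Rdiv_lt_0_compat; [apply Rmin_pos; lra|lra]).
      assert (Hh1 : h < d) by (unfold h; assert (Rmin d A <= d) by apply Rmin_l; lra).
      assert (Hh2 : h < A) by (unfold h; assert (Rmin d A <= A) by apply Rmin_r; lra).
      destruct (Hh h ltac:(lra)) as [H1 _].
      assert (Hg := Hpsi_ge (A - h) ltac:(lra)). lra. }
  assert (Hpsi2A : 0 <= psi2 A).
  { apply Rnot_lt_le. intro Hn.
    destruct (deriv_sign_neg psi1 A _ (Dpsi1 A HA) Hn) as [d [Hd Hh]].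
    set (h := Rmin d (D - A) / 2).
    assert (Hh0 : 0 < h) by (unfold h; apply Rdiv_lt_0_compat; [apply Rmin_pos; lra|lra]).
    assert (Hh1 : h < d) by (unfold h; assert (Rmin d (D - A) <= d) by apply Rmin_l; lra).
    assert (Hh2 : h < D - A) by (unfold h; assert (Rmin d (D - A) <= D - A) by apply Rmin_r; lra).
    destruct (MVT_cor2 psi psi1 A (A + h) ltac:(lra)) as [c0 [Hc0 Hc1]].
    { intros c1 Hc1. apply is_derive_Reals, Dpsi. lra. }
    destruct (Hh (c0 - A) ltac:(lra)) as [_ H2].
    replace (A + (c0 - A)) with c0 in H2 by ring.
    assert (Hg := Hpsi_ge (A + h) ltac:(lra)).
    rewrite HpsiA, Hpsi1A in *.
    assert (psi1 c0 * (A + h - A) < 0) by (apply Rmult_neg_pos; lra).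
    lra. }
  assert (Hval : psi2 A = q * (q - 1) * Rpower A q / (A * A) - 2 * q * Rpower A q).
  { unfold psi2. rewrite (G_ode q hq), (FG_ode q hq).
    unfold psi, psi1 in HpsiA, Hpsi1A.
    assert (E1 : wA * G1 q A - c * FG1 q A = - (q * Rpower A q / A)) by lra.
    assert (E2 : wA * Gq q A - c * FG q A = - Rpower A q) by lra.
    replace (wA * (A * G1 q A + q * Gq q A) - (c * (A * FG1 q A + q * FG q A) - q * (q - 1) * Rpower A q / (A * A)))
      with (A * (wA * G1 q A - c * FG1 q A) + q * (wA * Gq q A - c * FG q A) + q * (q - 1) * Rpower A q / (A * A)) by ring.
    rewrite E1, E2. field. lra. }
  rewrite Hval in Hpsi2A.
  assert (HR := Rpower_pos' A q).
  assert (HA2 : 0 < A * A) by nra.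
  assert (H3 : 0 <= (q * Rpower A q) * ((q - 1) / (A * A) - 2)).
  { replace ((q * Rpower A q) * ((q - 1) / (A * A) - 2))
      with (q * (q - 1) * Rpower A q / (A * A) - 2 * q * Rpower A q) by (field; lra). exact Hpsi2A. }
  assert (H4 : 0 <= (q - 1) / (A * A) - 2).
  { apply Rmult_le_reg_l with (q * Rpower A q); [nra|]. lra. }
  assert (H5 : 0 <= ((q - 1) / (A * A) - 2) * (A * A)) by nra.
  replace (((q - 1) / (A * A) - 2) * (A * A)) with (q - 1 - 2 * (A * A)) in H5 by (field; lra).
  lra.
Qed.


Lemma sg_loc x d y : 0 < d <= Rabs x -> Rabs (y - x) < d ->
  Rabs y = (if Rle_dec 0 x then 1 else -1) * y /\
  Rabs x - d < (if Rle_dec 0 x then 1 else -1) * y.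
Proof.
  intros Hd Hy. destruct Rle_dec;
  revert Hd Hy; unfold Rabs; repeat destruct Rcase_abs; intros; lra.
Qed.

Lemma sg_sq x : (if Rle_dec 0 x then 1 else -1) * (if Rle_dec 0 x then 1 else -1) = 1.
Proof. destruct Rle_dec; ring. Qed.

Theorem lemma5p5 (q Dst Ast : R) (hq : 0 < q)
  (hD : 0 < Dst) (hDroot : Dstar_eq q Dst)
  (hDuniq : forall D, 0 < D -> Dstar_eq q D -> D = Dst)
  (hA : 0 <= Ast <= Dst)
  (hAmax : forall a, 0 <= a <= Dst -> w q Dst a <= w q Dst Ast)
  (hAuniq : forall a, 0 <= a <= Dst ->
     (forall b, 0 <= b <= Dst -> w q Dst b <= w q Dst a) -> a = Ast) :
  (forall t x, 0 <= t < 1 -> Ast * sqrt (1 - t) < Rabs x ->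
     Lop_defined (Wstar q Dst Ast) t x /\ Lop (Wstar q Dst Ast) t x = 0) /\
  (0 < Ast -> forall t x, 0 <= t < 1 -> 0 < Rabs x < Ast * sqrt (1 - t) ->
     Lop_defined (Wstar q Dst Ast) t x /\ Lop (Wstar q Dst Ast) t x <= 0).
Proof.
  split.
  - intros t x [Ht0 Ht1] Hx.
    set (sg := if Rle_dec 0 x then 1 else -1).
    assert (Hsg : sg * sg = 1) by apply sg_sq.
    assert (HS := sqrt_pos (1 - t)).
    assert (HA0 : 0 <= Ast * sqrt (1 - t)) by (apply Rmult_le_pos; lra).
    assert (HsgX : Rabs x = sg * x).
    { destruct (sg_loc x (Rabs x) x) as [H _]; [lra| |exact H].
      rewrite Rminus_diag_eq, Rabs_R0 by reflexivity. lra. }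
    destruct (V_L q (w q Dst Ast) sg t x (Gq q) (G1 q) (G2 q) Ht1 Hsg
                (G_d0 q hq) (G_d1 q hq) (G_ode q hq)) as [dt [Vy [dyy [H1 [H2 [H3 H4]]]]]].
    destruct (Lop_loc (Wstar q Dst Ast)
      (fun s y => Rpower (1 - s) (q / 2) * Gq q (sg * y / sqrt (1 - s)) * w q Dst Ast)
      t x dt dyy Vy) as [HL1 HL2].
    + apply filter_imp with (2 := cont_lt_loc _ t (Rabs x) (sqrt_cont_loc Ast t Ht1) Hx).
      intros s Hs. unfold Wstar. destruct Rlt_dec as [_|n]; [|contradiction].
      rewrite HsgX. reflexivity.
    + apply filter_imp with (2 := ball_loc x (Rabs x - Ast * sqrt (1 - t)) ltac:(lra)).
      intros y Hy. destruct (sg_loc x (Rabs x - Ast * sqrt (1 - t)) y ltac:(lra) Hy) as [Hy1 Hy2].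
      fold sg in Hy1, Hy2.
      unfold Wstar. destruct Rlt_dec as [_|n].
      * rewrite Hy1. reflexivity.
      * exfalso. apply n. lra.
    + exact H1.
    + apply filter_imp with (P := fun _ => True); [intros y _; apply H2| apply filter_true].
    + exact H3.
    + split; [exact HL1|]. rewrite HL2. exact H4.
  - intros HApos t x [Ht0 Ht1] [Hx0 Hx1].
    assert (HA2 := KeyA q Dst Ast hq hD hA hAmax HApos).
    set (sg := if Rle_dec 0 x then 1 else -1).
    assert (Hsg : sg * sg = 1) by apply sg_sq.
    assert (HS := sqrt_pos (1 - t)).
    assert (HsgX : Rabs x = sg * x).
    { destruct (sg_loc x (Rabs x) x) as [H _]; [lra| |exact H].
      rewrite Rminus_diag_eq, Rabs_R0 by reflexivity. lra. }
    set (c := Rpower Dst q / FG q Dst).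
    destruct (V_L q c 1 t x (FG q) (FG1 q) (FG2 q) Ht1 ltac:(ring)
                (FG_d0 q hq) (FG_d1 q hq) (FG_ode q hq)) as [dt [Vy [dyy [H1 [H2 [H3 H4]]]]]].
    destruct (P_L q sg x ltac:(lra)) as [Py [dyyP [HP1 [HP2 [HP3 HP4]]]]].
    assert (Hmono : forall s, Rabs x < Ast * sqrt (1 - s) -> Rabs x < Dst * sqrt (1 - s)).
    { intros s Hs. assert (HS' := sqrt_pos (1 - s)).
      apply Rlt_le_trans with (1 := Hs). apply Rmult_le_compat_r; lra. }
    assert (HWeq : forall s y, 0 < Rabs y -> Rabs y < Ast * sqrt (1 - s) -> Rabs y = sg * y ->
       Wstar q Dst Ast s y =
       Rpower (1 - s) (q / 2) * FG q (1 * y / sqrt (1 - s)) * c - Rpower (sg * y) q).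
    { intros s y Hy0 Hy1 Hy2. assert (HS' := sqrt_pos (1 - s)).
      assert (HD' : Rabs y < Dst * sqrt (1 - s)).
      { apply Rlt_le_trans with (1 := Hy1). apply Rmult_le_compat_r; lra. }
      unfold Wstar. destruct Rlt_dec as [n|_]; [exfalso; lra|].
      unfold h. destruct Rlt_dec as [_|n]; [|contradiction].
      unfold Ubar. destruct Rlt_dec as [_|n]; [|contradiction].
      rewrite rpow_pos_eq by exact Hy0. rewrite Hy2, Rmult_1_l. unfold c, Rdiv. ring. }
    destruct (Lop_loc (Wstar q Dst Ast)
      (fun s y => Rpower (1 - s) (q / 2) * FG q (1 * y / sqrt (1 - s)) * c - Rpower (sg * y) q)
      t x (dt - 0) (dyy - dyyP) (fun y => Vy y - Py y)) as [HL1 HL2].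
    + apply filter_imp with (2 := cont_gt_loc _ t (Rabs x) (sqrt_cont_loc Ast t Ht1) Hx1).
      intros s Hs. apply HWeq; auto.
    + set (d := Rmin (Rabs x) (Ast * sqrt (1 - t) - Rabs x)).
      assert (Hd0 : 0 < d) by (apply Rmin_pos; lra).
      assert (Hd1 : d <= Rabs x) by apply Rmin_l.
      assert (Hd2 : d <= Ast * sqrt (1 - t) - Rabs x) by apply Rmin_r.
      apply filter_imp with (2 := ball_loc x d Hd0).
      intros y Hy. destruct (sg_loc x d y ltac:(lra) Hy) as [Hy1 Hy2].
      fold sg in Hy1, Hy2.
      assert (Hy3 : Rabs y <= Rabs x + Rabs (y - x)).
      { replace y with (x + (y - x)) at 1 by ring. apply Rabs_triang. }
      apply HWeq; lra.
    + apply (is_derive_minus (fun s => Rpower (1 - s) (q / 2) * FG q (1 * x / sqrt (1 - s)) * c)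
                            (fun _ => Rpower (sg * x) q)).
      * exact H1.
      * exact (is_derive_const (K:=R_AbsRing) (V:=R_NormedModule) _ _).
    + apply filter_imp with (2 := HP1). intros y Hy.
      apply (is_derive_minus (fun z => Rpower (1 - t) (q / 2) * FG q (1 * z / sqrt (1 - t)) * c)
                            (fun z => Rpower (sg * z) q)); [apply H2|exact Hy].
    + apply (is_derive_minus Vy Py); assumption.
    + split; [exact HL1|]. rewrite HL2.
      set (R0 := Rpower (sg * x) q).
      assert (HR : 0 < R0) by apply Rpower_pos'.
      assert (Hxne : x <> 0) by (intro; subst; rewrite Rabs_R0 in Hx0; lra).
      assert (Hs : 0 < 1 - t) by lra.
      assert (Hx2 : x * x < Ast * Ast * (1 - t)).
      { assert (HSS : sqrt (1 - t) * sqrt (1 - t) = 1 - t) by (apply sqrt_sqrt; lra).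
        replace (x * x) with (Rabs x * Rabs x) by (rewrite <- Rabs_mult; apply Rabs_right; nra).
        rewrite <- HSS.
        replace (Ast * Ast * (sqrt (1 - t) * sqrt (1 - t)))
          with ((Ast * sqrt (1 - t)) * (Ast * sqrt (1 - t))) by ring.
        assert (0 <= Rabs x) by apply Rabs_pos. nra. }
      replace (dt - 0 - x / (1 - t) * (Vy x - Py x) + / 2 * (dyy - dyyP))
        with ((dt - x / (1 - t) * Vy x + / 2 * dyy) + (x / (1 - t) * Py x - / 2 * dyyP)) by ring.
      rewrite H4, HP3, HP4. fold R0.
      replace (0 + (x / (1 - t) * (q * R0 / x) - / 2 * (q * (q - 1) * R0 / (x * x))))
        with ((q * R0) * (2 * (x * x) - (q - 1) * (1 - t)) / (2 * (x * x) * (1 - t)))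
        by (field; split; lra).
      assert (Hx2' : 0 < x * x) by (assert (H := Rsqr_pos_lt x Hxne); unfold Rsqr in H; exact H).
      unfold Rdiv. apply Rmult_le_0_r.
      * apply Rmult_le_0_l; [nra|]. nra.
      * left. apply Rinv_0_lt_compat. nra.
Qed.
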